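(* Let $\Gamma$ be an abelian group and $A$ a $\Gamma$-graded $*$-ring. (a) If $A$ has no infinite set of nonzero, pairwise orthogonal, homogeneous projections, then $A$ is a graded Rickart $*$-ring if and only if $A$ is a graded Baer $*$-ring. (b) If for every homogeneous projection $p$ the corner $pAp$ has no infinite set of nonzero, pairwise orthogonal, homogeneous projections, then $A$ is a graded locally Rickart $*$-ring if and only if $A$ is a graded locally Baer $*$-ring.
   Context: Graded $*$-ring: $A=\bigoplus_\gamma A_\gamma$, $A_\gamma A_\delta\subseteq A_{\gamma+\delta}$, with involution $*$ such that $A_\gamma^*\subseteq A_{-\gamma}$. Projection: $p=p^2=p^*$; projections $p,q$ are orthogonal if $pq=0$. Graded Rickart $*$-ring: the right annihilator of every homogeneous element is generated as a right ideal by a homogeneous projection. Graded Baer $*$-ring: the right annihilator of every set of homogeneous elements is generated as a right ideal by a homogeneous projection. $A$ is a graded locally Rickart (resp. Baer) $*$-ring if $pAp$ is a graded Rickart (resp. Baer) $*$-ring for every homogeneous projection $p$. *)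

(* Defs.v *)
(* Non-unital rings are allowed: the ring is an additive
   group A (zmodType) with an explicit multiplication and involution. *)
From HB Require Import structures.
From mathcomp Require Import all_boot all_order all_algebra.
Set Implicit Arguments. Unset Strict Implicit. Unset Printing Implicit Defensive.
Import GRing.Theory.
Local Open Scope ring_scope.

Section GradedStar.
Variables (Gam A : zmodType) (mul : A -> A -> A) (star : A -> A)
          (G : Gam -> A -> Prop).

Record is_star_ring : Prop := {
  mulA : forall x y z, mul x (mul y z) = mul (mul x y) z;
  mulDl : forall x y z, mul (x + y) z = mul x z + mul y z;
  mulDr : forall x y z, mul x (y + z) = mul x y + mul x z;
  starD : forall x y, star (x + y) = star x + star y;
  starM : forall x y, star (mul x y) = mul (star y) (star x);
  starK : forall x, star (star x) = x
}.

Record is_grading : Prop := {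
  grad0 : forall g, G g 0;
  gradB : forall g x y, G g x -> G g y -> G g (x - y);
  grad_span : forall x, exists s : seq (Gam * A),
      uniq (map fst s) /\ (forall c, c \in s -> G c.1 c.2) /\
      x = \sum_(c <- s) c.2;
  grad_indep : forall s : seq (Gam * A),
      uniq (map fst s) -> (forall c, c \in s -> G c.1 c.2) ->
      \sum_(c <- s) c.2 = 0 -> forall c, c \in s -> c.2 = 0
}.

Definition is_graded_star_ring : Prop :=
  [/\ is_star_ring, is_grading,
      (forall g d x y, G g x -> G d y -> G (g + d) (mul x y)) &
      (forall g x, G g x -> G (- g) (star x))].

Definition homog (x : A) : Prop := exists g, G g x.
Definition is_proj (p : A) : Prop := mul p p = p /\ star p = p.
Definition hproj (p : A) : Prop := is_proj p /\ homog p.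

Definition corner (p : A) : A -> Prop := fun y => exists a, y = mul p (mul a p).
Definition whole : A -> Prop := fun _ => True.

(* In the ring S (A itself or a corner pAp, with grading S ∩ A_gamma),
   the right annihilator of X is the right ideal q S. *)
Definition rann_gen_by (S X : A -> Prop) (q : A) : Prop :=
  forall y, (S y /\ forall x, X x -> mul x y = 0) <->
            (exists z, S z /\ y = mul q z).

Definition graded_rickart_on (S : A -> Prop) : Prop :=
  forall x, S x -> homog x ->
    exists q, S q /\ hproj q /\ rann_gen_by S (fun w => w = x) q.

Definition graded_baer_on (S : A -> Prop) : Prop :=
  forall X : A -> Prop, (forall x, X x -> S x /\ homog x) ->
    exists q, S q /\ hproj q /\ rann_gen_by S X q.

Definition graded_rickart : Prop := graded_rickart_on whole.
Definition graded_baer : Prop := graded_baer_on whole.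
Definition graded_locally_rickart : Prop :=
  forall p, hproj p -> graded_rickart_on (corner p).
Definition graded_locally_baer : Prop :=
  forall p, hproj p -> graded_baer_on (corner p).

Definition no_inf_orth (S : A -> Prop) : Prop :=
  forall P : A -> Prop,
    (forall q, P q -> S q /\ hproj q /\ q <> 0) ->
    (forall q r, P q -> P r -> q <> r -> mul q r = 0) ->
    exists l : seq A, forall q, P q -> q \in l.

End GradedStar.

(* Main.v *)
Require Import Defs.
From HB Require Import structures.
From mathcomp Require Import all_boot all_order all_algebra.
From Stdlib Require Import Classical ClassicalEpsilon.
From mathcomp Require Import zify.
Set Implicit Arguments. Unset Strict Implicit. Unset Printing Implicit Defensive.
Import GRing.Theory.
Local Open Scope ring_scope.

Lemma mulBl' (A : zmodType) (mul : A -> A -> A) (star : A -> A)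
  (hs : is_star_ring mul star) x y z : mul (x - y) z = mul x z - mul y z.
Proof. have := mulDl hs (x - y) y z; rewrite subrK => ->; by rewrite addrK. Qed.

Lemma mulBr' (A : zmodType) (mul : A -> A -> A) (star : A -> A)
  (hs : is_star_ring mul star) x y z : mul z (x - y) = mul z x - mul z y.
Proof. have := mulDr hs z (x - y) y; rewrite subrK => ->; by rewrite addrK. Qed.

Lemma mul0l' (A : zmodType) (mul : A -> A -> A) (star : A -> A)
  (hs : is_star_ring mul star) y : mul 0 y = 0.
Proof. by have := mulBl' hs 0 0 y; rewrite !subrr. Qed.

Lemma mul0r' (A : zmodType) (mul : A -> A -> A) (star : A -> A)
  (hs : is_star_ring mul star) y : mul y 0 = 0.
Proof. by have := mulBr' hs 0 0 y; rewrite !subrr. Qed.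

Lemma starB' (A : zmodType) (mul : A -> A -> A) (star : A -> A)
  (hs : is_star_ring mul star) x y : star (x - y) = star x - star y.
Proof. have := starD hs (x - y) y; rewrite subrK => ->; by rewrite addrK. Qed.

Lemma two_deg (Gam A : zmodType) (G : Gam -> A -> Prop) (hg : is_grading G)
  g h x : G g x -> G h x -> g <> h -> x = 0.
Proof.
move=> Hg Hh ne.
have Hh' : G h (- x) by have := gradB hg (grad0 hg h) Hh; rewrite sub0r.
have := grad_indep hg (s := [:: (g, x); (h, - x)]).
rewrite /= inE andbT.
have -> : (g != h) by apply/eqP.
move=> /(_ isT) H; apply: (H _ _ (g, x)); last by rewrite inE eqxx.
- by move=> c; rewrite !inE => /orP[] /eqP ->.
- by rewrite !big_cons big_nil addr0 subrr.
Qed.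

Lemma proj_deg0 (Gam A : zmodType) (mul : A -> A -> A) (star : A -> A)
  (G : Gam -> A -> Prop) (HA : is_graded_star_ring mul star G) p :
  hproj mul star G p -> G 0 p.
Proof.
case: HA => hs hg hm _ [[pp _] [g Hg]].
have H2 : G (g + g) (mul p p) by apply: hm.
rewrite pp in H2.
case: (eqVneq g (g + g)) => [e|ne].
  have g0 : g = 0 by apply: (@addrI _ g); rewrite addr0 -e.
  by rewrite -g0.
by rewrite (two_deg hg Hg H2 (elimN eqP ne)); apply: grad0.
Qed.

Lemma core (Gam A : zmodType) (mul : A -> A -> A) (star : A -> A)
  (G : Gam -> A -> Prop) (HA : is_graded_star_ring mul star G)
  (S : A -> Prop) (p : A) (hp : is_proj mul star p) (G0p : G 0 p)
  (HS : forall y, S y <-> mul p y = y /\ mul y p = y)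
  (rick : graded_rickart_on mul star G S)
  (noinf : no_inf_orth mul star G S) : graded_baer_on mul star G S.
Proof.
have HA' := HA.
case: HA' => hs hg hm hst.
have mA := Defs.mulA hs.
case: hp => pp sp.
move=> X HX.
pose Inv e := [/\ S e, is_proj mul star e, G 0 e &
   (forall y, S y -> (forall x, X x -> mul x y = 0) -> mul e y = y)].
have step : forall e x, Inv e -> X x -> mul x e <> 0 ->
    exists e', [/\ Inv e', mul e e' = e' & e' <> e].
  move=> e x [Se [ee se] G0e Ie] Xx nz.
  have [Sx hx] := HX x Xx.
  have [pe ep] := (HS e).1 Se.
  have [px xp] := (HS x).1 Sx.
  have Sxe : S (mul x e) by apply/HS; rewrite -mA ep mA px.
  have hxe : homog G (mul x e).
    by case: hx => g Hg; exists (g + 0); apply: hm.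
  case: (rick _ Sxe hxe) => q [Sq [hq Hq]].
  have G0q := proj_deg0 HA hq.
  case: hq => [[qq sq] _].
  have [pq qp] := (HS q).1 Sq.
  have xeq : mul (mul x e) q = 0.
    have : exists z, S z /\ q = mul q z.
      by exists p; split; [apply/HS; rewrite pp | rewrite qp].
    by move/Hq => [_ H]; apply: H.
  have qpe : mul q (p - e) = p - e.
    have : S (p - e) /\ (forall w, w = mul x e -> mul w (p - e) = 0).
      split; first by apply/HS; rewrite (mulBr' hs) (mulBl' hs) pp pe ep.
      by move=> w ->; rewrite (mulBr' hs) -!mA ep ee subrr.
    by move/Hq => [z [Sz ->]]; rewrite mA qq.
  have qe' : mul q e = q - (p - e).
    move: qpe; rewrite (mulBr' hs) qp => <-.
    by rewrite opprB addrC subrK.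
  have eqc : mul e q = mul q e.
    transitivity (star (mul q e)); first by rewrite (starM hs) se sq.
    by rewrite qe' !(starB' hs) sq sp se.
  have eqe : mul e (mul q e) = mul q e.
    by rewrite mA eqc -mA ee.
  exists (mul q e); split => //.
  - split.
    + by apply/HS; rewrite mA pq -mA ep.
    + split; first by rewrite -mA eqe mA qq.
      by rewrite (starM hs) se sq eqc.
    + by have := hm _ _ _ _ G0q G0e; rewrite addr0.
    + move=> y Sy hy.
      have ey := Ie y Sy hy.
      have : S y /\ (forall w, w = mul x e -> mul w y = 0).
        by split => // w ->; rewrite -mA ey; apply: hy.
      move/Hq => [z [Sz yz]].
      by rewrite -mA ey {1}yz mA qq -yz.
  - move=> h; apply: nz.
    have -> : mul x e = mul (mul x e) q by rewrite -mA eqc h.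
    exact: xeq.
case: (classic (exists e, Inv e /\ forall x, X x -> mul x e = 0)).
  case=> e [[Se [ee se] G0e Ie] He].
  have [pe ep] := (HS e).1 Se.
  exists e; split => //; split; first by split; [split | exists 0].
  move=> y; split.
    by case=> Sy Hy; exists y; split => //; rewrite Ie.
  case=> z [Sz ->]; have [pz zp] := (HS z).1 Sz; split.
    by apply/HS; rewrite mA pe -mA zp.
  by move=> x Xx; rewrite mA He // (mul0l' hs).
move=> nex.
have stepH : forall e, exists e', Inv e -> [/\ Inv e', mul e e' = e' & e' <> e].
  move=> e; case: (classic (Inv e)) => [Ie|nIe]; last by exists e.
  have : exists x, X x /\ mul x e <> 0.
    apply: NNPP => h; apply: nex; exists e; split => // x Xx.
    by apply: NNPP => h2; apply: h; exists x.
  case=> x [Xx nz]; have [e' He'] := step e x Ie Xx nz.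
  by exists e'.
pose F e := proj1_sig (constructive_indefinite_description _ (stepH e)).
have FP e : Inv e -> [/\ Inv (F e), mul e (F e) = F e & F e <> e].
  exact: (proj2_sig (constructive_indefinite_description _ (stepH e))).
pose E n := iter n F p.
have IE n : Inv (E n).
  elim: n => [|n IH]; last by case: (FP _ IH).
  split => //; first by apply/HS; rewrite pp.
  by move=> y /HS [].
have Eidem n : mul (E n) (E n) = E n by case: (IE n) => _ [].
have Estar n : star (E n) = E n by case: (IE n) => _ [].
have EmnK m k : mul (E m) (E (m + k)%N) = E (m + k)%N.
  elim: k => [|k IH]; first by rewrite addn0.
  rewrite addnS /=.
  case: (FP _ (IE (m + k)%N)) => _ h _.
  by rewrite -{1}h mA IH h.
have Emn m n : (m <= n)%N -> mul (E m) (E n) = E n.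
  by move=> /subnKC <-; apply: EmnK.
have Enm m n : (m <= n)%N -> mul (E n) (E m) = E n.
  move=> h; transitivity (star (mul (E m) (E n))).
    by rewrite (starM hs) !Estar.
  by rewrite Emn // Estar.
pose d n := E n - E n.+1.
have dE i j : mul (d i) (d j) =
    (mul (E i) (E j) - mul (E i) (E j.+1)) -
    (mul (E i.+1) (E j) - mul (E i.+1) (E j.+1)).
  by rewrite /d (mulBl' hs) !(mulBr' hs).
have dorth1 i j : (i < j)%N -> mul (d i) (d j) = 0.
  move=> hlt; rewrite dE (Emn i j) ?(Emn i j.+1) ?(Emn i.+1 j) ?(Emn i.+1 j.+1);
    try lia; by rewrite !subrr.
have dorth2 i j : (j < i)%N -> mul (d i) (d j) = 0.
  move=> hlt; rewrite dE (Enm j i) ?(Enm j.+1 i) ?(Enm j i.+1) ?(Enm j.+1 i.+1);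
    try lia; by rewrite !subrr.
have dproj n : mul (d n) (d n) = d n.
  by rewrite dE Eidem Eidem Emn // Enm // subrr subr0.
have dnz n : d n <> 0.
  move=> /subr0_eq h; case: (FP _ (IE n)) => _ _; apply.
  exact: (esym h).
have dinj : injective d.
  move=> i j e; case: (ltngtP i j) => // h; exfalso.
  - by apply: (dnz i); rewrite -{1}(dproj i) {2}e dorth1.
  - by apply: (dnz i); rewrite -{1}(dproj i) {2}e dorth2.
have H1 : forall q, (exists n, q = d n) -> S q /\ hproj mul star G q /\ q <> 0.
  move=> q [n ->].
  have [_ [en sn] G0n _] := IE n; have [_ [en1 sn1] G0n1 _] := IE n.+1.
  have [pn np] := (HS _).1 (match IE n with And4 a _ _ _ => a end).
  have [pn1 np1] := (HS _).1 (match IE n.+1 with And4 a _ _ _ => a end).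
  split.
    by apply/HS; rewrite /d (mulBr' hs) (mulBl' hs) pn np pn1 np1.
  split; last exact: dnz.
  split; last by exists 0; apply: (gradB hg).
  by split; [apply: dproj | rewrite /d (starB' hs) sn sn1].
have H2 : forall q r, (exists n, q = d n) -> (exists n, r = d n) -> q <> r -> mul q r = 0.
  move=> q r [i ->] [j ->] ne.
  case: (ltngtP i j) => hij; [exact: dorth1 | exact: dorth2 | by rewrite hij in ne].
have [l Hl] := noinf _ H1 H2.
have : (size (map d (iota 0 (size l).+1)) <= size l)%N.
  apply: uniq_leq_size; first by rewrite (map_inj_uniq dinj) iota_uniq.
  by move=> q /mapP [n _ ->]; apply: Hl; exists n.
by rewrite size_map size_iota ltnn.
Qed.

Lemma baer_rick (Gam A : zmodType) (mul : A -> A -> A) (star : A -> A)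
  (G : Gam -> A -> Prop) (S : A -> Prop) :
  graded_baer_on mul star G S -> graded_rickart_on mul star G S.
Proof. by move=> B x Sx hx; apply: B => w ->. Qed.

Lemma inS (Gam A : zmodType) (mul : A -> A -> A) (star : A -> A)
  (G : Gam -> A -> Prop) (HA : is_graded_star_ring mul star G) p :
  is_proj mul star p ->
  forall y, corner mul p y <-> mul p y = y /\ mul y p = y.
Proof.
case: HA => hs _ _ _ [pp _] y; have mA := Defs.mulA hs; split.
  by case=> a ->; rewrite !mA pp -!mA pp.
by case=> h1 h2; exists y; rewrite h2 h1.
Qed.

Theorem mainTheorem6 (Gam A : zmodType) (mul : A -> A -> A) (star : A -> A)
    (G : Gam -> A -> Prop)
    (HA : is_graded_star_ring mul star G) :
  (no_inf_orth mul star G (@whole A) ->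
     (graded_rickart mul star G <-> graded_baer mul star G)) /\
  ((forall p, hproj mul star G p -> no_inf_orth mul star G (corner mul p)) ->
     (graded_locally_rickart mul star G <-> graded_locally_baer mul star G)).
Proof.
have HA' := HA; case: HA' => hs hg _ _.
have mA := Defs.mulA hs.
split.
  move=> noinf; split; last exact: baer_rick.
  move=> rick.
  have [u [_ [hu Hu]]] := rick 0 I (ex_intro _ 0 (grad0 hg 0)).
  have G0u := proj_deg0 HA hu.
  case: hu => [[uu su] _].
  have uy y : mul u y = y.
    have h0 : whole y /\ (forall x, x = 0 -> mul x y = 0).
      by split => // x ->; apply: (mul0l' hs).
    have [z [_ ->]] := (Hu y).1 h0.
    by rewrite mA uu.
  have yu y : mul y u = y.
    by rewrite -{1}(starK hs y) -{1}su -(starM hs) uy (starK hs).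
  apply: (@core Gam A mul star G HA (@whole A) u (conj uu su) G0u _ rick noinf).
  move=> y; split; [move=> _; split; [exact: uy | exact: yu] | by []].
move=> noinf; split; last by move=> B p hp; apply: baer_rick; apply: B.
move=> R p hp.
have G0p := proj_deg0 HA hp.
apply: (@core Gam A mul star G HA (corner mul p) p (proj1 hp) G0p).
- exact: (inS HA (proj1 hp)).
- exact: R.
- exact: noinf.
Qed.
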